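(* Let $\chi\colon X\to B$ be a locale map that is epic, proper and open, and let $f\colon X\to\mathbb{R}$ be any locale map. Then there is a locale map $\rho\colon B\to\mathbb{R}$ such that for all $q\in\mathbb{Q}$, $$\rho^*(q,\infty)=\chi_!\,f^*(q,\infty), \qquad \rho^*(-\infty,q)=\chi_*\,f^*(-\infty,q).$$ Moreover, let $M$ be the pullback of $(\mathrm{id}_B,\rho)\colon B\hookrightarrow B\times\mathbb{R}$ along $(\chi,f)\colon X\to B\times\mathbb{R}$. Then $M$ is a sublocale of $X$, and the induced map $M\to B$ is an epimorphism.
   Context: Work constructively: neither excluded middle nor any form of choice is assumed. Conventions on frames and locales: - A frame is a poset with finite meets and arbitrary joins satisfying $a\wedge\bigvee_i b_i=\bigvee_i a\wedge b_i$. - Locales are the opposite category of frames. - For a locale $X$, $\mathcal{O}X$ is its frame. A locale map $f\colon X\to Y$ corresponds to a frame homomorphism $f^*\colon\mathcal{O}Y\to\mathcal{O}X$, which always has a right adjoint $f_*$. - A locale map $f$ is epic iff $f^*$ is injective. Open, closed and proper maps: - A locale map $f$ is open iff $f^*$ has a left adjoint $f_!$ satisfying $f_!(f^*(b)\wedge a)=b\wedge f_!(a)$. - $f$ is closed iff $f_*(f^*(b)\vee a)=b\vee f_*(a)$ for all $a,b$. - $f$ is proper iff it is closed and $f_*$ preserves directed joins. The locale of reals $\mathbb{R}$ has frame presented by generators $(q,\infty)$ and $(-\infty,q)$ for $q\in\mathbb{Q}$, subject to the relations: - $(p,\infty)=\bigvee_{q>p}(q,\infty)$; - $(-\infty,q)=\bigvee_{p<q}(-\infty,p)$;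 - $\bigvee_{q}(q,\infty)=1=\bigvee_q(-\infty,q)$; - $(-\infty,q)\wedge(p,\infty)=0$ for $p\ge q$; - $(-\infty,q)\vee(p,\infty)=1$ for $p<q$. $(\chi,f)$ denotes the map into the product locale given by the universal property. *)

(* Defs.v *)
From mathcomp Require Import all_boot all_algebra.

Set Implicit Arguments.
Unset Strict Implicit.
Unset Printing Implicit Defensive.

Local Open Scope ring_scope.

(* Frames.  Equality of frame elements is the order-equivalence  ≈   *)
(* (so no quotient types are needed).  Arbitrary joins are joins of   *)
(* arbitrary subsets, given as predicates on the carrier.             *)

Record Frame := {
  carrier :> Type;
  le : carrier -> carrier -> Prop;
  le_refl : forall x, le x x;
  le_trans : forall x y z, le x y -> le y z -> le x z;
  top : carrier;
  le_top : forall x, le x top;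
  meet : carrier -> carrier -> carrier;
  meet_l : forall x y, le (meet x y) x;
  meet_r : forall x y, le (meet x y) y;
  meet_glb : forall x y z, le z x -> le z y -> le z (meet x y);
  join : (carrier -> Prop) -> carrier;
  join_ub : forall (S : carrier -> Prop) x, S x -> le x (join S);
  join_lub : forall (S : carrier -> Prop) y,
      (forall x, S x -> le x y) -> le (join S) y;
  (* a /\ \/_i b_i <= \/_i (a /\ b_i)  (the other inequality is automatic) *)
  distr : forall a (S : carrier -> Prop),
      le (meet a (join S)) (join (fun y => exists2 x, S x & y = meet a x))
}.

Arguments le {_} _ _.
Arguments top {_}.
Arguments meet {_} _ _.
Arguments join {_} _.

Definition feq {L : Frame} (x y : L) : Prop := le x y /\ le y x.
Notation "x ≈ y" := (feq x y) (at level 70, no associativity).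

Definition bot {L : Frame} : L := join (fun _ => False).
Definition join2 {L : Frame} (x y : L) : L := join (fun z => z = x \/ z = y).

Definition img {A B : Type} (h : A -> B) (S : A -> Prop) : B -> Prop :=
  fun y => exists2 x, S x & y = h x.

Record FrameHom (A B : Frame) := {
  hfun :> A -> B;
  hmono : forall x y, le x y -> le (hfun x) (hfun y);
  htop : hfun top ≈ top;
  hmeet : forall x y, hfun (meet x y) ≈ meet (hfun x) (hfun y);
  hjoin : forall S : A -> Prop, hfun (join S) ≈ join (img hfun S)
}.

(* Locales = opposite category of frames.                              *)

Definition Locale := Frame.
Definition O (X : Locale) : Frame := X.

Definition LMap (X Y : Locale) := FrameHom (O Y) (O X).

Definition invimg {X Y : Locale} (f : LMap X Y) : O Y -> O X := hfun f.

(* direct image f_* , the right adjoint of f^*  *)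
Definition dirimg {X Y : Locale} (f : LMap X Y) (a : O X) : O Y :=
  join (fun b => le (invimg f b) a).

Definition lid (X : Locale) : LMap X X.
Proof.
  refine (@Build_FrameHom (O X) (O X) (fun x => x) _ _ _ _) => //.
    by split; apply: le_refl.
  by move=> x y; split; apply: le_refl.
  move=> S; split.
    apply: join_lub => x Sx; apply: join_ub; by exists x.
  apply: join_lub => y [x Sx ->]; by apply: join_ub.
Defined.

Definition lmap_eq {X Y : Locale} (f g : LMap X Y) : Prop :=
  forall b, invimg f b ≈ invimg g b.

Definition comp_eq {X Y W Z : Locale}
  (g : LMap Y Z) (f : LMap X Y) (k : LMap W Z) (h : LMap X W) : Prop :=
  forall c, invimg f (invimg g c) ≈ invimg h (invimg k c).

Definition comp_is {X Y Z : Locale}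
  (g : LMap Y Z) (f : LMap X Y) (e : LMap X Z) : Prop :=
  forall c, invimg f (invimg g c) ≈ invimg e c.

Definition epic {X Y : Locale} (f : LMap X Y) : Prop :=
  forall a b : O Y, invimg f a ≈ invimg f b -> a ≈ b.

Definition left_adjoint {X Y : Locale} (f : LMap X Y) (g : O X -> O Y) : Prop :=
  forall (a : O X) (b : O Y), le (g a) b <-> le a (invimg f b).

Definition frobenius {X Y : Locale} (f : LMap X Y) (g : O X -> O Y) : Prop :=
  forall (a : O X) (b : O Y), g (meet (invimg f b) a) ≈ meet b (g a).

Definition open_map {X Y : Locale} (f : LMap X Y) : Prop :=
  exists g : O X -> O Y, left_adjoint f g /\ frobenius f g.

Definition closed_map {X Y : Locale} (f : LMap X Y) : Prop :=
  forall (a : O X) (b : O Y),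
    dirimg f (join2 (invimg f b) a) ≈ join2 b (dirimg f a).

Definition directed {L : Frame} (S : L -> Prop) : Prop :=
  (exists x, S x) /\
  (forall x y, S x -> S y -> exists2 z, S z & le x z /\ le y z).

Definition proper_map {X Y : Locale} (f : LMap X Y) : Prop :=
  closed_map f /\
  (forall S : O X -> Prop, directed S ->
     dirimg f (join S) ≈ join (img (dirimg f) S)).

Definition sublocale_embedding {M X : Locale} (m : LMap M X) : Prop :=
  forall a : O M, exists b : O X, invimg m b ≈ a.

(* Generators: Up q = (q,oo), Down q = (-oo,q), q rational.            *)

Inductive RGen := Up of rat | Down of rat.

Definition reals_relations (L : Frame) (g : RGen -> L) : Prop :=
  (forall p : rat, g (Up p) ≈ join (fun x => exists2 q : rat, p < q & x = g (Up q)))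
  /\ (forall q : rat, g (Down q) ≈ join (fun x => exists2 p : rat, p < q & x = g (Down p)))
  /\ join (fun x => exists q : rat, x = g (Up q)) ≈ top
  /\ join (fun x => exists q : rat, x = g (Down q)) ≈ top
  /\ (forall p q : rat, q <= p -> meet (g (Down q)) (g (Up p)) ≈ bot)
  /\ (forall p q : rat, p < q -> join2 (g (Down q)) (g (Up p)) ≈ top).

Record RealsLocale := {
  OR :> Locale;
  gen : RGen -> O OR;
  gen_rel : reals_relations gen;
  gen_univ : forall (L : Frame) (g : RGen -> L), reals_relations g ->
      exists h : FrameHom (O OR) L, forall x, h (gen x) ≈ g x;
  gen_uniq : forall (L : Frame) (h1 h2 : FrameHom (O OR) L),
      (forall x, h1 (gen x) ≈ h2 (gen x)) -> forall a, h1 a ≈ h2 a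
}.

Definition is_product {A B P : Locale} (p1 : LMap P A) (p2 : LMap P B) : Prop :=
  forall (Z : Locale) (z1 : LMap Z A) (z2 : LMap Z B),
    (exists u : LMap Z P, comp_is p1 u z1 /\ comp_is p2 u z2) /\
    (forall u v : LMap Z P, comp_is p1 u z1 -> comp_is p2 u z2 ->
       comp_is p1 v z1 -> comp_is p2 v z2 -> lmap_eq u v).

Definition is_pullback {X Y Z M : Locale} (c : LMap X Z) (d : LMap Y Z)
    (mX : LMap M X) (mY : LMap M Y) : Prop :=
  comp_eq c mX d mY /\
  forall (W : Locale) (wX : LMap W X) (wY : LMap W Y),
    comp_eq c wX d wY ->
    (exists u : LMap W M, comp_is mX u wX /\ comp_is mY u wY) /\
    (forall u v : LMap W M, comp_is mX u wX -> comp_is mY u wY ->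
       comp_is mX v wX -> comp_is mY v wY -> lmap_eq u v).

(* Main.v *)
Require Import Defs.
From mathcomp Require Import all_boot all_order all_algebra.
Set Implicit Arguments.
Unset Strict Implicit.
Unset Printing Implicit Defensive.


Section FrameLemmas.
Variable L : Frame.
Implicit Types a b c x y : L.

Lemma feq_refl x : x ≈ x. Proof. split; apply: le_refl. Qed.
Lemma feq_sym x y : x ≈ y -> y ≈ x. Proof. by case. Qed.
Lemma feq_trans x y z : x ≈ y -> y ≈ z -> x ≈ z.
Proof. case=> h1 h2 [h3 h4]; split; apply: le_trans; eauto. Qed.

Lemma bot_le x : le (@bot L) x. Proof. by apply: join_lub. Qed.
Lemma le_join2_l a b : le a (join2 a b). Proof. apply: join_ub; by left. Qed.
Lemma le_join2_r a b : le b (join2 a b). Proof. apply: join_ub; by right. Qed.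
Lemma join2_lub a b c : le a c -> le b c -> le (join2 a b) c.
Proof. move=> h1 h2; apply: join_lub => x [->|->] //. Qed.
Lemma join2_mono a b a' b' : le a a' -> le b b' -> le (join2 a b) (join2 a' b').
Proof.
move=> h1 h2; apply: join2_lub.
  apply: le_trans h1 (le_join2_l _ _).
apply: le_trans h2 (le_join2_r _ _).
Qed.
Lemma join2_comm a b : le (join2 a b) (join2 b a).
Proof. apply: join2_lub; [apply: le_join2_r|apply: le_join2_l]. Qed.
Lemma meet_mono a b a' b' : le a a' -> le b b' -> le (meet a b) (meet a' b').
Proof.
move=> h1 h2; apply: meet_glb.
  apply: le_trans (meet_l _ _) h1.
apply: le_trans (meet_r _ _) h2.
Qed.
Lemma meet_comm a b : le (meet a b) (meet b a).
Proof. apply: meet_glb; [apply: meet_r|apply: meet_l]. Qed.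
Lemma distr2 a b c : le (meet a (join2 b c)) (join2 (meet a b) (meet a c)).
Proof.
apply: le_trans (distr _ _) _; apply: join_lub => y [x [->|->] ->].
  apply: le_join2_l.
apply: le_join2_r.
Qed.
Lemma join_le_join (S T : L -> Prop) :
  (forall x, S x -> exists2 y, T y & le x y) -> le (join S) (join T).
Proof.
move=> h; apply: join_lub => x /h [y Ty xy]; apply: le_trans xy (join_ub Ty).
Qed.
Lemma top_feq x : le top x -> x ≈ top.
Proof. by move=> h; split => //; apply: le_top. Qed.
End FrameLemmas.

Section HomLemmas.
Variables A B : Frame.
Variable h : FrameHom A B.

Lemma hfeq x y : x ≈ y -> h x ≈ h y.
Proof. by case=> h1 h2; split; apply: hmono. Qed.
Lemma hbot : le (h bot) bot.
Proof.
apply: le_trans (proj1 (hjoin h _)) _; apply: join_lub => y [x []].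
Qed.
Lemma htop_le : le top (h top). Proof. exact: proj2 (htop h). Qed.
Lemma hjoin2 a b : h (join2 a b) ≈ join2 (h a) (h b).
Proof.
split.
  apply: le_trans (proj1 (hjoin h _)) _; apply: join_lub => y [x [->|->] ->].
    apply: le_join2_l.
  apply: le_join2_r.
apply: join2_lub; apply: hmono; [apply: le_join2_l|apply: le_join2_r].
Qed.
Lemma hmeet_le a b : le (meet (h a) (h b)) (h (meet a b)).
Proof. exact: proj2 (hmeet h a b). Qed.
End HomLemmas.

Definition hcomp {A B C : Frame} (g : FrameHom B C) (h : FrameHom A B) : FrameHom A C.
Proof.
refine (@Build_FrameHom A C (fun x => g (h x)) _ _ _ _).
- by move=> x y xy; do 2 apply: hmono.
- apply: top_feq; apply: le_trans (htop_le g) _; apply: hmono; apply: htop_le.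
- move=> x y; split.
    apply: le_trans _ (proj1 (hmeet g _ _)); apply: hmono; exact: proj1 (hmeet h _ _).
  apply: le_trans (hmeet_le g _ _) _; apply: hmono; apply: hmeet_le.
- move=> S; split.
    apply: le_trans (hmono g (proj1 (hjoin h S))) _.
    apply: le_trans (proj1 (hjoin g _)) _.
    apply: join_le_join => y [x [z Sz ->] ->]; exists (g (h z)); last by apply: le_refl.
    by exists z.
  apply: join_lub => y [x Sx ->]; apply: hmono; apply: hmono; exact: join_ub.
Defined.

Section MapLemmas.
Variables X Y : Locale.
Variable chi : LMap X Y.

Lemma dir_unit b : le b (dirimg chi (chi b)).
Proof. apply: join_ub; apply: le_refl. Qed.
Lemma dir_counit a : le (chi (dirimg chi a)) a.
Proof.
apply: le_trans (proj1 (hjoin chi _)) _; apply: join_lub => y [x Hx ->] //.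
Qed.
Lemma dir_adj a b : le (chi b) a -> le b (dirimg chi a).
Proof. by move=> h; apply: join_ub. Qed.
Lemma dir_mono a a' : le a a' -> le (dirimg chi a) (dirimg chi a').
Proof. move=> h; apply: dir_adj; apply: le_trans (dir_counit _) h. Qed.
Lemma dir_meet a b : le (meet (dirimg chi a) (dirimg chi b)) (dirimg chi (meet a b)).
Proof.
apply: dir_adj; apply: le_trans (proj1 (hmeet chi _ _)) _.
apply: meet_mono; apply: dir_counit.
Qed.
Lemma dir_top : le top (dirimg chi top).
Proof. apply: dir_adj; apply: le_top. Qed.

Variable sh : O X -> O Y.
Hypothesis adj : left_adjoint chi sh.
Lemma sh_unit a : le a (chi (sh a)).
Proof. apply/adj; apply: le_refl. Qed.
Lemma sh_mono a a' : le a a' -> le (sh a) (sh a').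
Proof. move=> h; apply/adj; apply: le_trans h (sh_unit _). Qed.
Lemma sh_join (S : X -> Prop) : sh (join S) ≈ join (img sh S).
Proof.
split.
  apply/adj; apply: join_lub => x Sx; apply: le_trans (sh_unit x) _.
  apply: hmono; apply: join_ub; by exists x.
apply: join_lub => y [x Sx ->]; apply: sh_mono; exact: join_ub.
Qed.
Lemma sh_bot : le (sh bot) bot.
Proof. apply/adj; apply: bot_le. Qed.
End MapLemmas.

Section ImgFrame.
Variables (M X : Frame) (m : FrameHom X M).
Definition ImC := {a : M | exists b, m b ≈ a}.
Definition im_le (a b : ImC) := le (sval a) (sval b).
Lemma im_top_pf : exists b, m b ≈ top. Proof. exists top; exact: htop. Qed.
Definition im_top : ImC := exist _ top im_top_pf.
Lemma im_meet_pf (a b : ImC) : exists c, m c ≈ meet (sval a) (sval b).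
Proof.
case: a => [a [a' Ha]]; case: b => [b [b' Hb]] /=.
exists (meet a' b'); apply: feq_trans (hmeet m _ _) _.
case: Ha => Ha1 Ha2; case: Hb => Hb1 Hb2; split; apply: meet_mono => //.
Qed.
Definition im_meet (a b : ImC) : ImC := exist _ _ (im_meet_pf a b).
Lemma im_join_pf (S : ImC -> Prop) : exists c, m c ≈ join (img (@sval _ _) S).
Proof.
exists (join (fun b => exists2 x : ImC, S x & m b ≈ sval x)).
apply: feq_trans (hjoin m _) _; split.
  apply: join_le_join => y [b [x Sx Hb] ->]; exists (sval x); first by exists x.
  exact: proj1 Hb.
apply: join_le_join => y [x Sx ->]; case: (svalP x) => b Hb.
exists (m b); last exact: proj2 Hb.
exists b => //; by exists x.
Qed.
Definition im_join (S : ImC -> Prop) : ImC := exist _ _ (im_join_pf S).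

Definition ImF : Frame.
Proof.
refine (@Build_Frame ImC im_le _ _ im_top _ im_meet _ _ _ im_join _ _ _).
- move=> x; apply: le_refl.
- move=> x y z; apply: le_trans.
- move=> x; apply: le_top.
- move=> x y; apply: meet_l.
- move=> x y; apply: meet_r.
- move=> x y z; apply: meet_glb.
- move=> S x Sx; apply: join_ub; by exists x.
- move=> S y H; apply: join_lub => z [x Sx ->]; exact: H.
- move=> a S; rewrite /im_le /=; apply: le_trans (distr _ _) _.
  apply: join_lub => y [x [z Sz ->] ->]; apply: join_ub.
  by exists (im_meet a z); first by exists z.
Defined.
End ImgFrame.

Section Corestrict.
Variables (M X A : Frame) (m : FrameHom X M) (h : FrameHom A M).
Hypothesis pf : forall a, exists b, m b ≈ h a.
Definition cores : FrameHom A (ImF m).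
Proof.
refine (@Build_FrameHom A (ImF m) (fun a => exist _ (h a) (pf a)) _ _ _ _).
- move=> x y xy; exact: hmono.
- exact: htop h.
- move=> x y; exact: hmeet h x y.
- move=> S; case: (hjoin h S) => H1 H2; split.
    apply: le_trans H1 _; apply: join_le_join => y [x Sx ->].
    exists (h x); last by apply: le_refl.
    exists (exist _ (h x) (pf x)) => //; by exists x.
  apply: le_trans _ H2; apply: join_le_join => y [z [x Sx ->] ->].
  exists (h x); last by apply: le_refl.
  by exists x.
Defined.
End Corestrict.

Definition incl (M X : Frame) (m : FrameHom X M) : FrameHom (ImF m) M.
Proof.
refine (@Build_FrameHom (ImF m) M (fun a => sval a) _ _ _ _).
- by move=> x y.
- exact: feq_refl.
- move=> x y; exact: feq_refl.
- move=> S; exact: feq_refl.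
Defined.

Lemma pb_embed (X B P M : Locale) (cf : LMap X P) (idrho : LMap B P)
  (p1 : LMap P B) (Hid1 : comp_is p1 idrho (lid B))
  (mX : LMap M X) (mB : LMap M B) :
  is_pullback cf idrho mX mB -> sublocale_embedding mX.
Proof.
case=> Hcomm Hpb.
have pfX : forall a, exists b, mX b ≈ mX a by move=> a; exists a; apply: feq_refl.
have pfB : forall a, exists b, mX b ≈ mB a.
  move=> a; exists (cf (p1 a)); apply: feq_trans (Hcomm _) _.
  exact: hfeq (Hid1 a).
pose eX : LMap (ImF mX) X := cores pfX.
pose wB : LMap (ImF mX) B := cores pfB.
have Hc : comp_eq cf eX idrho wB by move=> c; exact: Hcomm c.
case: (Hpb _ eX wB Hc) => [[u [Hu1 Hu2]] _].
pose v : LMap M M := hcomp (incl mX) u.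
case: (Hpb _ mX mB Hcomm) => _ Huniq.
have Hv : lmap_eq v (lid M).
  apply: Huniq.
  - move=> c; exact: Hu1 c.
  - move=> c; exact: Hu2 c.
  - move=> c; exact: feq_refl.
  - move=> c; exact: feq_refl.
move=> a; case: (svalP (u a)) => b Hb; exists b.
exact: feq_trans Hb (Hv a).
Qed.

Local Open Scope ring_scope.

Section ClosedFrame.
Variables (X : Frame) (N : X).
Definition CC := {a : X | le N a}.
Definition cl_le (a b : CC) := le (sval a) (sval b).
Definition cl_top : CC := exist _ top (le_top N).
Definition cl_meet (a b : CC) : CC :=
  exist _ (meet (sval a) (sval b)) (meet_glb (svalP a) (svalP b)).
Definition cl_join (S : CC -> Prop) : CC :=
  exist _ (join2 N (join (img (@sval _ _) S))) (le_join2_l _ _).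
Definition ClF : Frame.
Proof.
refine (@Build_Frame CC cl_le _ _ cl_top _ cl_meet _ _ _ cl_join _ _ _).
- move=> x; apply: le_refl.
- move=> x y z; apply: le_trans.
- move=> x; apply: le_top.
- move=> x y; apply: meet_l.
- move=> x y; apply: meet_r.
- move=> x y z; apply: meet_glb.
- move=> S x Sx; apply: le_trans (le_join2_r _ _); apply: join_ub; by exists x.
- move=> S y H; apply: join2_lub; first exact: (svalP y).
  apply: join_lub => z [x Sx ->]; exact: H.
- move=> a S; rewrite /cl_le /=; apply: le_trans (distr2 _ _ _) _.
  apply: join2_mono; first exact: meet_r.
  apply: le_trans (distr _ _) _.
  apply: join_lub => y [x [z Sz ->] ->]; apply: join_ub.
  by exists (cl_meet a z); first by exists z.
Defined.

Definition clmap : FrameHom X ClF.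
Proof.
refine (@Build_FrameHom X ClF (fun x => exist _ (join2 x N) (le_join2_r _ _)) _ _ _ _).
- move=> x y xy; apply: join2_mono => //; exact: le_refl.
- split; [apply: le_top | apply: le_join2_l].
- move=> x y; split.
    apply: meet_glb; apply: join2_mono; (try apply: le_refl);
      [apply: meet_l | apply: meet_r].
  rewrite /cl_le /=.
  apply: le_trans (distr2 _ _ _) _; apply: join2_lub; last first.
    apply: le_trans (meet_r _ _) (le_join2_r _ _).
  apply: le_trans (meet_comm _ _) _; apply: le_trans (distr2 _ _ _) _.
  apply: join2_lub; last apply: le_trans (meet_r _ _) (le_join2_r _ _).
  apply: le_trans _ (le_join2_l _ _); exact: meet_comm.
- move=> S; split; rewrite /cl_le /=.
    apply: join2_lub; last by apply: le_join2_l.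
    apply: join_lub => x Sx; apply: le_trans _ (le_join2_r _ _).
    apply: le_trans _ (join_ub _); last first.
      exists (exist (fun a => le N a) (join2 x N) (le_join2_r _ _)) => //; by exists x.
    exact: le_join2_l.
  apply: join2_lub; first exact: le_join2_r.
  apply: join_lub => y [z [x Sx ->] ->] /=; apply: join2_mono; last exact: le_refl.
  exact: join_ub.
Defined.
End ClosedFrame.
Local Open Scope ring_scope.

Lemma join_eq (L : Frame) (S T : L -> Prop) :
  (forall x, S x -> exists2 y, T y & le x y) ->
  (forall y, T y -> exists2 x, S x & le y x) -> join S ≈ join T.
Proof. move=> h1 h2; split; apply: join_le_join => //. Qed.

Lemma directed_total (L : Frame) (S : L -> Prop) :
  (exists x, S x) -> (forall x y, S x -> S y -> le x y \/ le y x) -> directed S.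
Proof.
move=> h1 h2; split => // x y Sx Sy; case: (h2 x y Sx Sy) => h.
  exists y => //; split => //; exact: le_refl.
exists x => //; split => //; exact: le_refl.
Qed.

Lemma rat_sub1 (q : rat) : q - 1 < q.
Proof. by rewrite Num.Theory.ltrBlDr Num.Theory.ltrDl Num.Theory.ltr01. Qed.

Section Main.
Variables (R : RealsLocale) (X B : Locale) (chi : LMap X B) (sh : O X -> O B).
Hypotheses (chi_epic : epic chi) (chi_proper : proper_map chi)
  (adj : left_adjoint chi sh) (frob : frobenius chi sh).
Variable f : LMap X R.

Definition U q := f (gen R (Up q)).
Definition D q := f (gen R (Down q)).
Definition c q := sh (U q).
Definition dl q := dirimg chi (D q).

Lemma genD_mono (p q : rat) : p <= q -> le (gen R (Down p)) (gen R (Down q)).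
Proof.
rewrite Order.POrderTheory.le_eqVlt => /orP [/eqP ->|lt]; first exact: le_refl.
case: (gen_rel R) => _ [r2 _].
apply: le_trans (proj2 (r2 q)); apply: join_ub; by exists p.
Qed.
Lemma genU_anti (p q : rat) : p <= q -> le (gen R (Up q)) (gen R (Up p)).
Proof.
rewrite Order.POrderTheory.le_eqVlt => /orP [/eqP ->|lt]; first exact: le_refl.
case: (gen_rel R) => [r1 _].
apply: le_trans (proj2 (r1 p)); apply: join_ub; by exists q.
Qed.
Lemma D_mono p q : p <= q -> le (D p) (D q).
Proof. move=> h; apply: hmono; exact: genD_mono. Qed.

Lemma sh_feq a b : a ≈ b -> sh a ≈ sh b.
Proof. by case=> h1 h2; split; apply: sh_mono. Qed.
Lemma dir_feq a b : a ≈ b -> dirimg chi a ≈ dirimg chi b.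
Proof. by case=> h1 h2; split; apply: dir_mono. Qed.

Lemma epic_dir b : le (dirimg chi (chi b)) b.
Proof.
have: chi (dirimg chi (chi b)) ≈ chi b.
  split; first exact: dir_counit.
  apply: hmono; exact: dir_unit.
by move/chi_epic => [].
Qed.
Lemma sh_top : le top (sh top).
Proof.
have: chi (sh top) ≈ chi top.
  split; first by apply: (le_trans (le_top _)); apply: htop_le.
  apply: (le_trans (le_top _)); exact: sh_unit.
move/chi_epic => [_ h]; exact: le_trans (le_top _) h.
Qed.
Lemma dir_bot : le (dirimg chi bot) bot.
Proof.
apply: le_trans (epic_dir bot); apply: dir_mono; exact: bot_le.
Qed.

Lemma cd_bot (p q : rat) : q <= p -> le (meet (dl q) (c p)) bot.
Proof.
move=> qp; case: (gen_rel R) => _ [_ [_ [_ [r5 _]]]].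
apply: le_trans (proj2 (frob _ _)) _.
apply: le_trans (sh_bot adj); apply: (sh_mono adj).
apply: le_trans (hbot f); apply: le_trans _ (hmono f (proj1 (r5 p q qp))).
apply: le_trans _ (hmeet_le f _ _); apply: meet_mono; last exact: le_refl.
exact: dir_counit.
Qed.

Definition g (x : RGen) : O B := match x with Up q => c q | Down q => dl q end.

Lemma c_join p : c p ≈ join (fun x => exists2 q, p < q & x = c q).
Proof.
case: (gen_rel R) => [r1 _].
apply: feq_trans (sh_feq (hfeq f (r1 p))) _.
apply: feq_trans (sh_feq (hjoin f _)) _.
apply: feq_trans (sh_join adj _) _.
apply: join_eq.
  move=> x [y [z [q pq ->] ->] ->]; exists (c q); first by exists q.
  exact: le_refl.
move=> x [q pq ->]; exists (c q); last exact: le_refl.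
exists (f (gen R (Up q))) => //; exists (gen R (Up q)) => //; by exists q.
Qed.

Lemma dl_join q : dl q ≈ join (fun x => exists2 p, p < q & x = dl p).
Proof.
case: (gen_rel R) => _ [r2 _].
apply: feq_trans (dir_feq (hfeq f (r2 q))) _.
apply: feq_trans (dir_feq (hjoin f _)) _.
apply: feq_trans ((proj2 chi_proper) _ _) _.
  apply: directed_total.
    exists (f (gen R (Down (q - 1)))); exists (gen R (Down (q - 1))) => //.
    by exists (q - 1) => //; apply: rat_sub1.
  move=> x y [x' [p1 _ ->] ->] [y' [p2 _ ->] ->].
  case/orP: (Order.TotalTheory.le_total p1 p2) => h.
    by left; apply: D_mono.
  by right; apply: D_mono.
apply: join_eq.
  move=> x [y [z [p pq ->] ->] ->]; exists (dl p); first by exists p.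
  exact: le_refl.
move=> x [p pq ->]; exists (dl p); last exact: le_refl.
exists (f (gen R (Down p))) => //; exists (gen R (Down p)) => //; by exists p.
Qed.

Lemma cd_top (p q : rat) : p < q -> join2 (dl q) (c p) ≈ top.
Proof.
move=> pq; case: (gen_rel R) => _ [_ [_ [_ [_ r6]]]].
apply: top_feq; apply: le_trans (dir_top chi) _.
apply: le_trans _ (join2_comm _ _).
apply: le_trans _ (proj1 ((proj1 chi_proper) (D q) (c p))).
apply: dir_mono; apply: le_trans (htop_le f) _.
apply: le_trans (hmono f (proj2 (r6 p q pq))) _.
apply: le_trans (proj1 (hjoin2 f _ _)) _.
apply: le_trans (join2_comm _ _) _.
apply: join2_mono; last exact: le_refl.
exact: sh_unit.
Qed.

Lemma g_rel : reals_relations g.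
Proof.
case: (gen_rel R) => [r1 [r2 [r3 [r4 [r5 r6]]]]].
split; first exact: c_join.
split; first exact: dl_join.
split.
  apply: top_feq; apply: le_trans sh_top _.
  apply: le_trans (sh_mono adj (htop_le f)) _.
  apply: le_trans (sh_mono adj (hmono f (proj2 r3))) _.
  apply: le_trans (sh_mono adj (proj1 (hjoin f _))) _.
  apply: le_trans (proj1 (sh_join adj _)) _.
  apply: join_le_join => x [y [z [q ->] ->] ->]; exists (c q); first by exists q.
  exact: le_refl.
split.
  apply: top_feq; apply: le_trans (dir_top chi) _.
  apply: le_trans (dir_mono chi (htop_le f)) _.
  apply: le_trans (dir_mono chi (hmono f (proj2 r4))) _.
  apply: le_trans (dir_mono chi (proj1 (hjoin f _))) _.
  apply: le_trans (proj1 ((proj2 chi_proper) _ _)) _.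
    apply: directed_total.
      exists (f (gen R (Down 0))); exists (gen R (Down 0)) => //; by exists 0.
    move=> x y [x' [p1 ->] ->] [y' [p2 ->] ->].
    case/orP: (Order.TotalTheory.le_total p1 p2) => h.
      by left; apply: D_mono.
    by right; apply: D_mono.
  apply: join_le_join => x [y [z [q ->] ->] ->]; exists (dl q); first by exists q.
  exact: le_refl.
split.
  move=> p q qp; split; [exact: cd_bot | exact: bot_le].
exact: cd_top.
Qed.

Definition term q := meet (D q) (chi (c q)).
Definition N : O X := join (fun x => exists q, x = term q).
Definition J (F : seq rat) : O X := join (fun x => exists2 q, q \in F & x = term q).

Lemma max_in (F : seq rat) (x : rat) : x \in F ->
  exists2 m, m \in F & forall q, q \in F -> q <= m.
Proof.
elim: F x => [|y F IH] x //; rewrite inE => _.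
case: F IH => [|z F] IH.
  exists y; first by rewrite inE.
  by move=> q; rewrite inE => /eqP ->; apply: Order.POrderTheory.lexx.
have [m mF Hm] := IH z (mem_head _ _).
case/orP: (Order.TotalTheory.le_total y m) => h.
  exists m; first by rewrite inE mF orbT.
  move=> q; rewrite inE => /orP [/eqP ->|]; [exact: h|exact: Hm].
exists y; first by rewrite inE eqxx.
move=> q; rewrite inE => /orP [/eqP ->|]; first exact: Order.POrderTheory.lexx.
move=> qF; exact: Order.POrderTheory.le_trans (Hm q qF) h.
Qed.

Lemma J_nil : le (J [::]) bot.
Proof. by apply: join_lub => x [q]. Qed.

Lemma J_bot n (F : seq rat) : (size F <= n)%N -> le (dirimg chi (J F)) bot.
Proof.
elim: n F => [|n IH] F.
  rewrite leqn0 => /nilP ->; apply: le_trans dir_bot; apply: dir_mono; exact: J_nil.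
case: F => [|x F0] hs.
  apply: le_trans dir_bot; apply: dir_mono; exact: J_nil.
set F := x :: F0 in hs *.
have [m mF Hm] := max_in (mem_head x F0).
set F' := [seq q <- F | q < m].
have hs' : (size F' <= n)%N.
  rewrite size_filter -ltnS; apply: leq_trans hs.
  rewrite -(count_predC (fun q => q < m) F) -{1}[count _ F]addn0 ltn_add2l.
  rewrite -has_count; apply/hasP; exists m => //=.
  by rewrite Order.POrderTheory.ltxx.
have JD : le (J F) (D m).
  apply: join_lub => y [q qF ->]; apply: le_trans (meet_l _ _) _.
  by apply: D_mono; apply: Hm.
have JF' : le (meet (J F) (chi (dl m))) (J F').
  apply: le_trans (meet_comm _ _) _; apply: le_trans (distr _ _) _.
  apply: join_lub => y [z [q qF ->] ->].
  case qm: (q < m).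
    apply: le_trans (meet_r _ _) _; apply: join_ub; exists q => //.
    by rewrite mem_filter qm.
  have eqm : q = m.
    apply: Order.POrderTheory.le_anti; rewrite Hm //=.
    by rewrite Order.TotalTheory.leNgt qm.
  rewrite eqm; apply: le_trans _ (bot_le _).
  apply: le_trans _ (hbot chi); apply: le_trans _ (hmono chi (cd_bot (Order.POrderTheory.lexx m))).
  apply: le_trans _ (hmeet_le chi _ _); apply: meet_mono; first exact: le_refl.
  exact: meet_r.
apply: le_trans (IH F' hs').
apply: le_trans _ (dir_mono chi JF').
apply: le_trans _ (dir_meet chi _ _).
apply: meet_glb; first exact: le_refl.
apply: le_trans (dir_mono chi JD) _; exact: dir_unit.
Qed.

Lemma dirN_bot : le (dirimg chi N) bot.
Proof.
pose T := fun y => exists F, y = J F.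
have dT : directed T.
  split; first by exists (J [::]); exists [::].
  move=> x y [F ->] [G ->]; exists (J (F ++ G)); first by exists (F ++ G).
  split; apply: join_le_join => z [q qF ->]; exists (term q) => //; try exact: le_refl;
    exists q => //; by rewrite mem_cat qF ?orbT.
have NT : le N (join T).
  apply: join_lub => x [q ->]; apply: le_trans _ (join_ub (ex_intro _ [:: q] erefl)).
  apply: join_ub; exists q => //; by rewrite inE.
apply: le_trans (dir_mono chi NT) _.
apply: le_trans (proj1 ((proj2 chi_proper) _ dT)) _.
apply: join_lub => y [x [F ->] ->]; exact: J_bot (leqnn _).
Qed.

Lemma up_eq q : join2 (U q) N ≈ join2 (chi (c q)) N.
Proof.
case: (gen_rel R) => _ [_ [_ [_ [_ r6]]]].
split.
  apply: join2_mono; [exact: sh_unit | exact: le_refl].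
apply: join2_lub; last exact: le_join2_r.
apply: le_trans (hmono chi (proj1 (c_join q))) _.
apply: le_trans (proj1 (hjoin chi _)) _.
apply: join_lub => y [x [r qr ->] ->].
apply: le_trans (meet_glb (le_refl _) (le_top _)) _.
apply: le_trans (meet_mono (le_refl _) (htop_le f)) _.
apply: le_trans (meet_mono (le_refl _) (hmono f (proj2 (r6 q r qr)))) _.
apply: le_trans (meet_mono (le_refl _) (proj1 (hjoin2 f _ _))) _.
apply: le_trans (distr2 _ _ _) _.
apply: le_trans _ (join2_comm _ _); apply: join2_mono; last exact: meet_r.
apply: le_trans (meet_comm _ _) _; apply: join_ub; by exists r.
Qed.

Lemma down_eq q : join2 (D q) N ≈ join2 (chi (dl q)) N.
Proof.
case: (gen_rel R) => _ [r2 _].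
split; last first.
  apply: join2_mono; [exact: dir_counit | exact: le_refl].
apply: join2_lub; last exact: le_join2_r.
apply: le_trans (hmono f (proj1 (r2 q))) _.
apply: le_trans (proj1 (hjoin f _)) _.
apply: join_lub => y [x [p pq ->] ->].
apply: le_trans (meet_glb (le_refl _) (le_top _)) _.
apply: le_trans (meet_mono (le_refl _) (htop_le chi)) _.
apply: le_trans (meet_mono (le_refl _) (hmono chi (proj2 (cd_top pq)))) _.
apply: le_trans (meet_mono (le_refl _) (proj1 (hjoin2 chi _ _))) _.
apply: le_trans (distr2 _ _ _) _.
apply: join2_mono; first exact: meet_r.
apply: join_ub; by exists p.
Qed.

Lemma main_epic (rho : LMap B R) (Hrho : forall x, rho (gen R x) ≈ g x)
  (P : Locale) (p1 : LMap P B) (p2 : LMap P R) (Hprod : is_product p1 p2)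
  (cf : LMap X P) (idrho : LMap B P)
  (Hcf1 : comp_is p1 cf chi) (Hcf2 : comp_is p2 cf f)
  (Hid1 : comp_is p1 idrho (lid B)) (Hid2 : comp_is p2 idrho rho)
  (M : Locale) (mX : LMap M X) (mB : LMap M B) :
  is_pullback cf idrho mX mB -> epic mB.
Proof.
case=> Hcomm Hpb.
pose W : Locale := ClF N.
pose w : LMap W X := clmap N.
pose h1 : FrameHom (O R) (O W) := hcomp w f.
pose h2 : FrameHom (O R) (O W) := hcomp w (hcomp chi rho).
have Hg : forall x, h1 (gen R x) ≈ h2 (gen R x).
  case=> q; split.
  - exact: le_trans (proj1 (up_eq q)) (join2_mono (hmono chi (proj2 (Hrho (Up q)))) (le_refl N)).
  - exact: le_trans (join2_mono (hmono chi (proj1 (Hrho (Up q)))) (le_refl N)) (proj2 (up_eq q)).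
  - exact: le_trans (proj1 (down_eq q)) (join2_mono (hmono chi (proj2 (Hrho (Down q)))) (le_refl N)).
  - exact: le_trans (join2_mono (hmono chi (proj1 (Hrho (Down q)))) (le_refl N)) (proj2 (down_eq q)).
have Hgu := gen_uniq Hg.
pose z1 : LMap W B := hcomp w chi.
pose z2 : LMap W R := hcomp w f.
case: (Hprod W z1 z2) => _ Huniq.
have Heq : lmap_eq (hcomp w cf : LMap W P) (hcomp z1 idrho).
  have H1 : comp_is p1 (hcomp w cf : LMap W P) z1.
    move=> x; exact (hfeq w (Hcf1 x)).
  have H2 : comp_is p2 (hcomp w cf : LMap W P) z2.
    move=> x; exact (hfeq w (Hcf2 x)).
  have H3 : comp_is p1 (hcomp z1 idrho : LMap W P) z1.
    move=> x; exact (hfeq w (hfeq chi (Hid1 x))).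
  have H4 : comp_is p2 (hcomp z1 idrho : LMap W P) z2.
    move=> x; apply: feq_trans (hfeq w (hfeq chi (Hid2 x))) _.
    exact: feq_sym (Hgu x).
  exact: Huniq H1 H2 H3 H4.
case: (Hpb W w z1 Heq) => [[u [_ Hu2]] _].
move=> a b Hab.
have Hw : forall a b, mB a ≈ mB b -> le (join2 (chi a) N) (join2 (chi b) N).
  move=> a' b' H.
  have := feq_trans (feq_sym (Hu2 a')) (feq_trans (hfeq u H) (Hu2 b')).
  by case.
have key : forall a b, mB a ≈ mB b -> le a b.
  move=> a' b' H.
  apply: le_trans (dir_unit chi a') _.
  apply: le_trans (dir_mono chi (le_join2_l (chi a') N)) _.
  apply: le_trans (dir_mono chi (Hw _ _ H)) _.
  apply: le_trans (proj1 ((proj1 chi_proper) N b')) _.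
  apply: join2_lub; first exact: le_refl.
  apply: le_trans dirN_bot (bot_le _).
by split; apply: key => //; apply: feq_sym.
Qed.

End Main.

Theorem mainTheorem2 (R : RealsLocale) (X B : Locale)
  (chi : LMap X B) (chi_shriek : O X -> O B)
  (chi_epic : epic chi) (chi_proper : proper_map chi)
  (chi_open_adj : left_adjoint chi chi_shriek)
  (chi_open_frob : frobenius chi chi_shriek)
  (f : LMap X R) :
  exists rho : LMap B R,
    (forall q : rat,
        invimg rho (gen R (Up q)) ≈ chi_shriek (invimg f (gen R (Up q))) /\
        invimg rho (gen R (Down q)) ≈ dirimg chi (invimg f (gen R (Down q)))) /\
    (forall (P : Locale) (p1 : LMap P B) (p2 : LMap P R),
       is_product p1 p2 ->
       forall (cf : LMap X P) (idrho : LMap B P),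
         (* cf = (chi, f) *)
         comp_is p1 cf chi -> comp_is p2 cf f ->
         (* idrho = (id_B, rho) *)
         comp_is p1 idrho (lid B) -> comp_is p2 idrho rho ->
         forall (M : Locale) (mX : LMap M X) (mB : LMap M B),
           is_pullback cf idrho mX mB ->
           sublocale_embedding mX /\ epic mB).
Proof.
have Hrel := g_rel chi_epic chi_proper chi_open_adj chi_open_frob f.
have [rho Hrho] := @gen_univ R _ _ Hrel.
exists rho; split.
  move=> q; split; [exact (Hrho (Up q)) | exact (Hrho (Down q))].
move=> P p1 p2 Hprod cf idrho Hcf1 Hcf2 Hid1 Hid2 M mX mB Hpb; split.
  exact (pb_embed Hid1 Hpb).
exact: (main_epic chi_epic chi_proper chi_open_adj chi_open_frob Hrho Hprod Hcf1 Hcf2 Hid1 Hid2 Hpb).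
Qed.
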